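(* Let $t \geq 1$ be an integer and let $\mathcal{F} \neq \emptyset$ be a finite family of finite sets. Then $\beta(\mathcal{F},t) \geq \frac{1}{|\mathcal{F}|}$, and equality holds if and only if $|A \cap B| < t$ for any distinct $A$ and $B$ in $\mathcal{F}$.
   Context: A family $\mathcal{A}$ is $t$-intersecting if $|A \cap B| \geq t$ for all $A, B \in \mathcal{A}$ with $A \neq B$. $l(\mathcal{F},t)$ is the size of a largest $t$-intersecting sub-family of $\mathcal{F}$. For a family $\mathcal{A}$, $\mathcal{A}^{t,+} = \{A \in \mathcal{A} : |A \cap B| \geq t \text{ for all } B \in \mathcal{A}\setminus\{A\}\}$ and $\mathcal{A}^{t,-} = \mathcal{A} \setminus \mathcal{A}^{t,+}$. For $\mathcal{A} \subseteq \mathcal{F}$, $\beta(\mathcal{F},t,\mathcal{A}) = \frac{l(\mathcal{F},t) - |\mathcal{A}^{t,+}|}{|\mathcal{A}^{t,-}|}$ if $\mathcal{A}^{t,-} \neq \emptyset$, and $\frac{l(\mathcal{F},t)}{|\mathcal{F}|}$ if $\mathcal{A}^{t,-} = \emptyset$; $\beta(\mathcal{F},t) = \min\{\beta(\mathcal{F},t,\mathcal{A}) : \mathcal{A} \subseteq \mathcal{F}\}$. *)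

(* Defs.v *)
(* Ground set: a finType T (every finite family of finite
   sets lives in the finite universe given by its union). *)
From HB Require Import structures.
From mathcomp Require Import all_boot all_order all_algebra.
Set Implicit Arguments. Unset Strict Implicit. Unset Printing Implicit Defensive.
Import Order.TTheory GRing.Theory Num.Theory.
Local Open Scope ring_scope.

Section Defs.
Variable T : finType.

Definition t_intersecting (t : nat) (A : {set {set T}}) : bool :=
  [forall A1 in A, forall A2 in A, (A1 != A2) ==> (t <= #|A1 :&: A2|)%N].

Definition lmax (F : {set {set T}}) (t : nat) : nat :=
  \max_(A in powerset F | t_intersecting t A) #|A|.

Definition fam_plus (A : {set {set T}}) (t : nat) : {set {set T}} :=
  [set X in A | [forall B in A :\ X, (t <= #|X :&: B|)%N]].
Definition fam_minus (A : {set {set T}}) (t : nat) : {set {set T}} :=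
  A :\: fam_plus A t.

Definition beta_at (F : {set {set T}}) (t : nat) (A : {set {set T}}) : rat :=
  if fam_minus A t == set0 then (lmax F t)%:R / #|F|%:R
  else ((lmax F t)%:R - #|fam_plus A t|%:R) / #|fam_minus A t|%:R.

(* beta(F,t) = min over all subfamilies A ⊆ F (set0 ⊆ F seeds the fold) *)
Definition beta (F : {set {set T}}) (t : nat) : rat :=
  \big[Order.min/beta_at F t set0]_(A in powerset F) beta_at F t A.

End Defs.

(* Main.v *)
Require Import Defs.
From HB Require Import structures.
From mathcomp Require Import all_boot all_order all_algebra.
From mathcomp Require Import zify.
Import Order.TTheory GRing.Theory Num.Theory.
Local Open Scope ring_scope.

Lemma frac_ge (a m f : nat) : (0 < a)%N -> (0 < m)%N -> (m <= f)%N ->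
  (1 / f%:R <= a%:R / m%:R :> rat) /\ (1 / f%:R = a%:R / m%:R :> rat -> a = 1%N /\ m = f).
Proof.
move=> a0 m0 mf; have f0 : (0 < f)%N by lia.
have fR : 0 < f%:R :> rat by rewrite ltr0n.
have mR : 0 < m%:R :> rat by rewrite ltr0n.
have key : (1 / f%:R = a%:R / m%:R :> rat) <-> (m = a * f)%N.
  split.
  - move=> /eqP; rewrite eqr_div ?pnatr_eq0 -?lt0n // mul1r -natrM eqr_nat => /eqP ->.
    by rewrite mulnC.
  - by move=> ->; apply/eqP; rewrite eqr_div ?pnatr_eq0 -?lt0n // ?muln_gt0 ?a0 // mul1r -natrM eqr_nat mulnC.
split.
- rewrite ler_pdivrMr // mulrAC ler_pdivlMr // mul1r -natrM ler_nat; nia.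
- by move/key => e; nia.
Qed.

Section S.
Variables (T : finType) (F : {set {set T}}) (t : nat).

Lemma le_lmax (A : {set {set T}}) : A \subset F -> t_intersecting t A -> (#|A| <= lmax F t)%N.
Proof. by move=> sAF tA; rewrite /lmax; apply: leq_bigmax_cond; rewrite inE sAF. Qed.

Lemma lmax_ge1 : F != set0 -> (1 <= lmax F t)%N.
Proof.
case/set0Pn=> X XF; rewrite -(cards1 X); apply: le_lmax; first by rewrite sub1set.
apply/forallP=> X1; apply/implyP=> /set1P->; apply/forallP=> X2; apply/implyP=> /set1P->.
by rewrite eqxx.
Qed.

Lemma lmax1P : (lmax F t <= 1)%N <->
  (forall A B, A \in F -> B \in F -> A != B -> (#|A :&: B| < t)%N).
Proof.
split.
- move=> l1 A B AF BF AB; rewrite ltnNge; apply/negP=> tAB.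
  have : (#|[set A; B]| <= lmax F t)%N.
    apply: le_lmax; first by apply/subsetP=> X /set2P[]->.
    apply/forallP=> X1; apply/implyP=> /set2P H1; apply/forallP=> X2; apply/implyP=> /set2P H2.
    apply/implyP=> ne.
    case: H1 H2 ne => -> [] -> //; rewrite ?eqxx //; by rewrite setIC.
  by rewrite cards2 AB; lia.
- move=> H; apply/bigmax_leqP=> A; rewrite inE => /andP[sAF tA].
  rewrite leqNgt; apply/negP=> /card_gt1P[x [y [xA yA xy]]].
  have := H x y (subsetP sAF x xA) (subsetP sAF y yA) xy.
  move/forallP: tA => /(_ x); rewrite xA /= => /forallP /(_ y); rewrite yA xy /=.
  by move=> h1 h2; lia.
Qed.

Lemma plus_sub (A : {set {set T}}) : fam_plus A t \subset A.
Proof. by apply/subsetP=> X; rewrite inE => /andP[]. Qed.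

Lemma plusY (A : {set {set T}}) Y : Y \in fam_minus A t ->
  t_intersecting t (Y |: fam_plus A t).
Proof.
rewrite inE => /andP[_ YA].
have plusP X : X \in fam_plus A t -> X \in A /\ forall B, B \in A -> B != X -> (t <= #|X :&: B|)%N.
  rewrite inE => /andP[XA /forallP H]; split=> // B BA BX.
  by have := H B; rewrite !inE BX BA.
apply/forallP=> X1; apply/implyP=> /setU1P H1; apply/forallP=> X2; apply/implyP=> /setU1P H2.
apply/implyP=> ne.
case: H1 => [E1|P1].
- case: H2 => [E2|P2]; first by rewrite E1 E2 eqxx in ne.
  case: (plusP _ P2) => _ h; rewrite setIC; apply: h.
  + by rewrite E1.
  + exact: ne.
- case: (plusP _ P1) => _ h; apply: h; last by rewrite eq_sym.
  by case: H2 => [->|/plusP[]].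
Qed.

Lemma beta_at_ge (A : {set {set T}}) : F != set0 -> A \subset F ->
  (1 / #|F|%:R <= beta_at F t A) /\
  (beta_at F t A = 1 / #|F|%:R -> (lmax F t <= 1)%N).
Proof.
move=> F0 sAF; have l1 := lmax_ge1 F0.
have Fp : (0 < #|F|)%N by rewrite card_gt0.
rewrite /beta_at; case: ifP => [_|/negbT /set0Pn [Y YM]].
- have := @frac_ge _ _ _ l1 Fp (leqnn _); case=> h1 h2; split=> // e.
  by case: (h2 (esym e)) => ->.
- have pl : (#|fam_plus A t| + 1 <= lmax F t)%N.
    have YA : Y \in A by move: YM; rewrite inE => /andP[].
    have Yp : Y \notin fam_plus A t by move: YM; rewrite inE => /andP[].
    have sub : Y |: fam_plus A t \subset F.
      by rewrite subUset sub1set (subsetP sAF) //= (subset_trans (plus_sub A)).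
    have := le_lmax _ sub (@plusY _ _ YM : t_intersecting t _); rewrite cardsU1 Yp /=; lia.
  have cA : (#|fam_plus A t| + #|fam_minus A t| = #|A|)%N.
    by rewrite /fam_minus cardsD (setIidPr (plus_sub A)) addnC subnK // subset_leq_card // plus_sub.
  have cAF : (#|A| <= #|F|)%N by apply: subset_leq_card.
  have m0 : (0 < #|fam_minus A t|)%N by apply/card_gt0P; exists Y.
  have ha : (0 < lmax F t - #|fam_plus A t|)%N by lia.
  have := @frac_ge _ _ _ ha m0 (_ : #|fam_minus A t| <= #|F|)%N.
  rewrite natrB; last by lia.
  case=> [|h1 h2]; first by lia.
  split=> // e; case: (h2 (esym e)) => e1 e2; lia.
Qed.

End S.

Theorem proposition3p1 (T : finType) (F : {set {set T}}) (t : nat) :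
  (1 <= t)%N -> F != set0 ->
  (1 / #|F|%:R <= beta F t) /\
  (beta F t = 1 / #|F|%:R <->
     (forall A B, A \in F -> B \in F -> A != B -> (#|A :&: B| < t)%N)).
Proof.
move=> _ F0.
have att : exists2 A : {set {set T}}, A \subset F & beta F t = beta_at F t A.
  rewrite /beta; apply: (big_ind (fun x => exists2 A : {set {set T}}, A \subset F & x = beta_at F t A)).
  - by exists set0; rewrite ?sub0set.
  - move=> x y [A1 s1 ->] [A2 s2 ->]; rewrite /Order.min; case: ifP=> _.
    + by exists A1.
    + by exists A2.
  - by move=> A; rewrite inE => sAF; exists A.
case: att => A0 sA0 eA0.
split.
- rewrite eA0; exact: (@beta_at_ge _ _ t _ F0 sA0).1.
split.
- by rewrite eA0 => e; apply/lmax1P; exact: (@beta_at_ge _ _ t _ F0 sA0).2.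
- move/lmax1P=> l1; apply/eqP; rewrite eq_le; apply/andP; split; last first.
    rewrite eA0; exact: (@beta_at_ge _ _ t _ F0 sA0).1.
  have -> : 1 / #|F|%:R = beta_at F t set0 :> rat.
    rewrite /beta_at /fam_minus set0D eqxx.
    have h := @lmax_ge1 _ _ t F0.
    by have -> : lmax F t = 1%N by apply/eqP; rewrite eqn_leq l1 h.
  by rewrite /beta (bigD1 set0) ?inE ?sub0set //= ge_min lexx.
Qed.
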